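(* Let $f:\mathbb{R}^{n\times n}\to\mathbb{R}$ be differentiable. Let $f^*=\min_{X\in\Pi_n} f(X)$ and $\underline{f}=\min_{X\in\mathcal{D}_n} f(X)$. Suppose $\sigma>\frac12(f^*-\underline{f})$. Then any global minimizer $X(\sigma)$ of \[ \min_{X\in\mathcal{D}_n}\ f(X)+\sigma\|X\|_0 \] is also a global minimizer of $\min_{X\in\Pi_n} f(X)$.
   Context: $\Pi_n=\{X\in\mathbb{R}^{n\times n}: X\mathbf{e}=X^{\mathsf T}\mathbf{e}=\mathbf{e},\ X_{ij}\in\{0,1\}\}$ is the set of $n\times n$ permutation matrices, $\mathcal{D}_n=\{X\in\mathbb{R}^{n\times n}: X\mathbf{e}=X^{\mathsf T}\mathbf{e}=\mathbf{e},\ X\ge 0\}$ is the set of doubly stochastic matrices (entrywise inequality), $\mathbf{e}$ is the all-ones vector, and $\|X\|_0$ is the number of nonzero entries of $X$. *)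

(* Defs.v *)
From HB Require Import structures.
From mathcomp Require Import all_boot all_order all_algebra.
From mathcomp Require Import all_classical all_reals all_analysis.
Set Implicit Arguments. Unset Strict Implicit. Unset Printing Implicit Defensive.
Import Order.TTheory GRing.Theory Num.Theory.
Local Open Scope ring_scope.

Definition doubly_stochastic (R : realType) (n : nat) (X : 'M[R]_n) : Prop :=
  (forall i j, 0 <= X i j) /\
  (forall i, \sum_(j < n) X i j = 1) /\
  (forall j, \sum_(i < n) X i j = 1).

Definition perm_matrix (R : realType) (n : nat) (X : 'M[R]_n) : Prop :=
  (forall i j, X i j = 0 \/ X i j = 1) /\
  (forall i, \sum_(j < n) X i j = 1) /\
  (forall j, \sum_(i < n) X i j = 1).

Definition l0norm (R : realType) (n : nat) (X : 'M[R]_n) : nat :=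
  #|[set ij : 'I_n * 'I_n | X ij.1 ij.2 != 0]|.

(* Main.v *)
Require Import Defs.
From HB Require Import structures.
From mathcomp Require Import all_boot all_order all_algebra.
From mathcomp Require Import all_classical all_reals all_analysis.
From mathcomp Require Import lra.
Import Order.TTheory GRing.Theory Num.Theory numFieldNormedType.Exports.
Local Open Scope ring_scope.

Definition rowc (R : realType) (n : nat) (X : 'M[R]_n) (i : 'I_n) :=
  #|[set j | X i j != 0]|.
Arguments rowc {R n}.

Lemma cardE_sum (T : finType) (P : pred T) :
  #|[set x | P x]| = (\sum_x (P x : nat))%N.
Proof.
rewrite -sum1_card big_mkcond /=; apply: eq_bigr => x _.
by rewrite inE; case: (P x).
Qed.

Lemma l0norm_rows {R : realType} {n : nat} (X : 'M[R]_n) :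
  l0norm X = (\sum_i rowc X i)%N.
Proof.
rewrite /l0norm /rowc (@cardE_sum _ (fun ij : 'I_n * 'I_n => X ij.1 ij.2 != 0)).
rewrite (eq_bigr (fun i => (\sum_j ((X i j != 0%R) : nat))%N)); first by rewrite pair_big.
by move=> i _; rewrite (@cardE_sum _ (fun j => X i j != 0)).
Qed.

Lemma two_le_sum {R : realType} {n : nat} (F : 'I_n -> R) j1 j2 :
  (forall j, 0 <= F j) -> j1 != j2 -> F j1 + F j2 <= \sum_j F j.
Proof.
move=> F0 ne.
rewrite (bigD1 j1) //= (bigD1 j2) /=; last by rewrite eq_sym.
by rewrite addrA lerDl sumr_ge0.
Qed.

Lemma row_nonzero {R : realType} {n : nat} (X : 'M[R]_n) i :
  \sum_j X i j = 1 -> exists j, X i j != 0.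
Proof.
move=> s; apply/existsP; apply: contraT; rewrite negb_exists => /forallP H.
move: s; rewrite big1 => [/eqP|j _]; first by rewrite eq_sym oner_eq0.
by move: (H j); rewrite negbK => /eqP.
Qed.

Lemma row_single {R : realType} {n : nat} (X : 'M[R]_n) i :
  \sum_j X i j = 1 -> (rowc X i <= 1)%N -> forall j, X i j = 0 \/ X i j = 1.
Proof.
move=> s r.
have [j0 nz] := row_nonzero X i s.
have oth : forall j, j != j0 -> X i j = 0.
  move=> j ne; apply/eqP; apply: contraT => nzj.
  suff : (1 < rowc X i)%N by rewrite ltnNge r.
  apply/card_gt1P; exists j, j0; by rewrite !inE nzj nz ne.
have e0 : X i j0 = 1.
  by rewrite -s (bigD1 j0) //= big1 ?addr0 // => j /oth.
move=> j; case: (eqVneq j j0) => [->|/oth]; by [right|left].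
Qed.

Lemma perm_rowc {R : realType} {n : nat} (X : 'M[R]_n) i :
  perm_matrix X -> (rowc X i <= 1)%N.
Proof.
move=> [H01 [Hr Hc]]; rewrite leqNgt; apply/negP => /card_gt1P [j1 [j2 []]].
rewrite !inE => n1 n2 ne.
have e1 : X i j1 = 1 by case: (H01 i j1) => // h; rewrite h eqxx in n1.
have e2 : X i j2 = 1 by case: (H01 i j2) => // h; rewrite h eqxx in n2.
have := two_le_sum (fun j => X i j) _ _ _ ne.
rewrite Hr e1 e2 => /(_ _)/wrap[]; last by lra.
by move=> j; case: (H01 i j) => ->.
Qed.

Lemma rowc_gt0 {R : realType} {n : nat} (X : 'M[R]_n) i :
  \sum_j X i j = 1 -> (0 < rowc X i)%N.
Proof.
move=> s; have [j nz] := row_nonzero X i s.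
by apply/card_gt0P; exists j; rewrite inE.
Qed.

Lemma ds_two {R : realType} {n : nat} (X : 'M[R]_n) :
  doubly_stochastic X -> ~ perm_matrix X ->
  exists i1 i2, [/\ i1 != i2, (1 < rowc X i1)%N & (1 < rowc X i2)%N].
Proof.
move=> [H0 [Hr Hc]] np.
case: (boolP [exists i, exists j, (X i j != 0) && (X i j != 1)]); last first.
  rewrite negb_exists => /forallP H; exfalso; apply: np; split=> // i j.
  move: (H i); rewrite negb_exists => /forallP /(_ j).
  rewrite negb_and !negbK => /orP [] /eqP; by [left|right].
move=> /existsP [i /existsP [j /andP [n0 n1]]].
have ri : (1 < rowc X i)%N.
  rewrite ltnNge; apply/negP => le.
  by case: (row_single X i (Hr i) le j) => /eqP; rewrite ?(negbTE n0) ?(negbTE n1).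
case: (boolP [exists i2, (i2 != i) && (1 < rowc X i2)%N]).
  move=> /existsP [i2 /andP [ne r2]]; exists i, i2; split=> //.
  by rewrite eq_sym.
rewrite negb_exists => /forallP H; exfalso.
have oth : forall k, k != i -> X k j = 0 \/ X k j = 1.
  move=> k ne; move: (H k); rewrite ne /= -leqNgt => h.
  exact: (row_single X k (Hr k) h j).
have := Hc j; rewrite (bigD1 i) //=.
case: (boolP [exists k, (k != i) && (X k j == 1)]).
  move=> /existsP [k /andP [ne /eqP e]].
  rewrite (bigD1 k) //= e => s.
  have : 0 <= \sum_(l | (l != i) && (l != k)) X l j by apply: sumr_ge0.
  have := H0 i j; move: n0; rewrite eq_sym => /negbTE n0.
  have : X i j != 0 by rewrite eq_sym in n0; rewrite n0.
  move=> nz g1 g2; have : 0 < X i j by rewrite lt_def nz g1.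
  lra.
rewrite negb_exists => /forallP H2.
rewrite big1 ?addr0 => [e|k ne]; first by rewrite e eqxx in n1.
case: (oth k ne) => // e; move: (H2 k); by rewrite ne e eqxx.
Qed.

Lemma l0_ge_n {R : realType} {n : nat} (X : 'M[R]_n) :
  doubly_stochastic X -> (n <= l0norm X)%N.
Proof.
move=> [H0 [Hr Hc]]; rewrite l0norm_rows.
rewrite -{1}(card_ord n) -sum1_card.
by apply: leq_sum => i _; apply: rowc_gt0 (Hr i).
Qed.

Lemma l0_perm {R : realType} {n : nat} (X : 'M[R]_n) :
  perm_matrix X -> (l0norm X <= n)%N.
Proof.
move=> HP; rewrite l0norm_rows.
apply: (@leq_trans (\sum_(i < n) 1)%N); last by rewrite sum1_card card_ord.
by apply: leq_sum => i _; apply: perm_rowc.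
Qed.

Lemma l0_nonperm {R : realType} {n : nat} (X : 'M[R]_n) :
  doubly_stochastic X -> ~ perm_matrix X -> (n + 2 <= l0norm X)%N.
Proof.
move=> D np; have [i1 [i2 [ne r1 r2]]] := ds_two X D np.
have [H0 [Hr Hc]] := D.
rewrite l0norm_rows.
apply: (@leq_trans (\sum_(i < n) (1 + (i == i1) + (i == i2)))%N).
  rewrite !big_split /= sum1_card card_ord -addnA leq_add2l.
  have E : forall k : 'I_n, (\sum_(i < n) (i == k) = 1)%N.
    by move=> k; rewrite (bigD1 k) //= eqxx big1 // => i /negbTE ->.
  by rewrite !E.
apply: leq_sum => i _.
case: (eqVneq i i1) => [e1|n1]; case: (eqVneq i i2) => [e2|n2] /=.
- by move: ne; rewrite -e1 -e2 eqxx.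
- by rewrite addn0; move: r1; rewrite -e1.
- by move: r2; rewrite -e2 !addn0.
- by rewrite !addn0; apply: rowc_gt0 (Hr i).
Qed.

Lemma perm_ds {R : realType} {n : nat} (X : 'M[R]_n) :
  perm_matrix X -> doubly_stochastic X.
Proof.
move=> [H [Hr Hc]]; split=> // i j; by case: (H i j) => ->.
Qed.

Theorem lemma3p1 (R : realType) (n : nat) (f : 'M[R]_n -> R)
  (fstar flow sigma : R) (Xs : 'M[R]_n) :
  (forall X : 'M[R]_(n, n), differentiable f X) ->
  (* fstar = min over permutation matrices of f *)
  (exists P : 'M[R]_n, perm_matrix P /\ f P = fstar) ->
  (forall P : 'M[R]_n, perm_matrix P -> fstar <= f P) ->
  (* flow = min over doubly stochastic matrices of f *)
  (exists D : 'M[R]_n, doubly_stochastic D /\ f D = flow) ->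
  (forall D : 'M[R]_n, doubly_stochastic D -> flow <= f D) ->
  sigma > (fstar - flow) / 2 ->
  doubly_stochastic Xs ->
  (forall Y : 'M[R]_n, doubly_stochastic Y ->
     f Xs + sigma * (l0norm Xs)%:R <= f Y + sigma * (l0norm Y)%:R) ->
  perm_matrix Xs /\ (forall P : 'M[R]_n, perm_matrix P -> f Xs <= f P).
Proof.
move=> _ [P [HP fP]] _ _ Hlow Hs DXs Hmin.
have fl : flow <= fstar by rewrite -fP; apply: Hlow; apply: perm_ds.
have s0 : 0 <= sigma by lra.
have Xp : perm_matrix Xs.
  apply: contrapT => np.
  have h := Hmin P (perm_ds P HP).
  have l1 : sigma * (n + 2)%:R <= sigma * (l0norm Xs)%:R.
    by apply: ler_wpM2l => //; rewrite ler_nat; apply: l0_nonperm.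
  have l2 : sigma * (l0norm P)%:R <= sigma * n%:R.
    by apply: ler_wpM2l => //; rewrite ler_nat; apply: l0_perm.
  have fx := Hlow _ DXs.
  move: l1; rewrite natrD mulrDr => l1.
  lra.
split=> // Q HQ.
have h := Hmin Q (perm_ds Q HQ).
have l1 : sigma * n%:R <= sigma * (l0norm Xs)%:R.
  by apply: ler_wpM2l => //; rewrite ler_nat; apply: l0_ge_n.
have l2 : sigma * (l0norm Q)%:R <= sigma * n%:R.
  by apply: ler_wpM2l => //; rewrite ler_nat; apply: l0_perm.
lra.
Qed.
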